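(* Let $n\ge1$, $k\ge2$, $r=n(k-1)$, and let $\mathbf c_0$ be a stable configuration on the hyperpath $P_n^k$ with bank vertex $0$. Let $\mathcal G(\mathbf c_0)$ be its firing graph. Then: (i) for every $t\in[n]$ and every configuration $\mathbf c$ of $\mathcal G(\mathbf c_0)$, the vertex $t(k-1)$ is fired at $\mathbf c$ (i.e. $\mathbf c$ is not stable and $u_{\mathbf c}=t(k-1)$) if and only if $\mathbf c(t(k-1))=k-1$; (ii) for every configuration $\mathbf c$ of $\mathcal G(\mathbf c_0)$, $\omega(\mathbf c)\ge\omega(\mathbf c_0)$.
   Context: The $k$-uniform hyperpath $P_n^k$ has vertex set $\{0,1,\dots,n(k-1)\}$ and edges $\mathbf e_t=\{(k-1)(t-1),(k-1)(t-1)+1,\dots,(k-1)t\}$ for $t\in[n]$. A configuration is a function $\mathbf c:[r]\to\mathbb Z_{\ge0}$ (the value at the bank vertex $0$ is ignored), with weight $\omega(\mathbf c)=\sum_{v=1}^r\mathbf c(v)$. It is stable if $0\le\mathbf c(v)\le k-2$ for all $v\in[r]$. For a stable $\mathbf c_0$ put $\bar{\mathbf c}_0(v)=\mathbf c_0(v)+1$ for $v\in[k-1]$ and $\bar{\mathbf c}_0(v)=\mathbf c_0(v)$ otherwise. For a non-stable configuration $\mathbf c$ let $u_{\mathbf c}=\max\{v\in[r]:\mathbf c(v)\ge k-1\}$; for each edge $\mathbf e$ containing $u_{\mathbf c}$ define $\mathbf c_{\mathbf e}$ by $\mathbf c_{\mathbf e}(u_{\mathbf c})=\mathbf c(u_{\mathbf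 c})-(k-1)$, $\mathbf c_{\mathbf e}(v)=\mathbf c(v)+1$ for $v\in\mathbf e\setminus\{u_{\mathbf c},0\}$, and $\mathbf c_{\mathbf e}(v)=\mathbf c(v)$ otherwise (''firing $u_{\mathbf c}$ on $\mathbf e$''). The firing graph $\mathcal G(\mathbf c_0)$ is the directed graph whose vertices are $\mathbf c_0$ together with all configurations obtainable from $\bar{\mathbf c}_0$ by finitely many such firing steps (each applied to a non-stable configuration), and whose arrows are $\mathbf c_0\to\bar{\mathbf c}_0$ and $\mathbf c\to\mathbf c_{\mathbf e}$ for every non-stable vertex $\mathbf c$ and every edge $\mathbf e\ni u_{\mathbf c}$. *)

(* Defs.v *)
From mathcomp Require Import all_boot.
Set Implicit Arguments. Unset Strict Implicit. Unset Printing Implicit Defensive.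

(* A configuration is a function nat -> nat; only its values on [r] = {1..r}
   matter (the value at the bank vertex 0 and beyond r are never used by
   stability, weight, u_c or the statement). *)
Definition config := nat -> nat.

Definition in_edge (k t v : nat) : bool :=
  ((k - 1) * (t - 1) <= v) && (v <= (k - 1) * t).

Definition weight (r : nat) (c : config) : nat := \sum_(1 <= v < r.+1) c v.

Definition stable (k r : nat) (c : config) : Prop :=
  forall v, 1 <= v <= r -> c v <= k - 2.

Definition cbar (k : nat) (c0 : config) : config :=
  fun v => if (1 <= v) && (v <= k - 1) then (c0 v).+1 else c0 v.

(* u_c = max {v in [r] : c(v) >= k-1}  (meaningful for non-stable c) *)
Definition u_c (k r : nat) (c : config) : nat :=
  \max_(1 <= v < r.+1 | k - 1 <= c v) v.

Definition fire (k : nat) (c : config) (u t : nat) : config :=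
  fun v => if v == u then c v - (k - 1)
           else if in_edge k t v && (v != 0) then (c v).+1 else c v.

Definition step (n k : nat) (c c' : config) : Prop :=
  let r := n * (k - 1) in
  ~ stable k r c /\
  exists t, [/\ 1 <= t <= n, in_edge k t (u_c k r c) & c' = fire k c (u_c k r c) t].

Inductive reach (n k : nat) (s : config) : config -> Prop :=
| reach_refl : reach n k s s
| reach_step : forall c c', reach n k s c -> step n k c c' -> reach n k s c'.

Definition in_firing_graph (n k : nat) (c0 c : config) : Prop :=
  c = c0 \/ reach n k (cbar k c0) c.

(* Main.v *)
Require Import Defs.
From mathcomp Require Import all_boot zify.
From Stdlib Require Import Classical.
Set Implicit Arguments. Unset Strict Implicit. Unset Printing Implicit Defensive.

Lemma sum_split (f : nat -> nat) a u b : a <= u < b ->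
  \sum_(a <= v < b) f v = \sum_(a <= v < u) f v + f u + \sum_(u.+1 <= v < b) f v.
Proof.
move=> /andP[h1 h2].
rewrite (@big_cat_nat _ _ _ u) //=; last exact: ltnW.
by rewrite (@big_ltn _ _ _ u) // addnA.
Qed.

Lemma sum_bool_le (x : nat -> bool) a b : \sum_(a <= v < b) (x v : nat) <= b - a.
Proof.
apply: (@leq_trans (\sum_(a <= v < b) 1)).
  by apply: leq_sum => v _; exact: leq_b1.
by rewrite sum_nat_const_nat muln1.
Qed.

Lemma cnt_interval a b N :
  \sum_(1 <= v < N.+1) (((a <= v) && (v <= b)) : nat) = minn N b - a.-1.
Proof.
elim: N => [|N IH]; first by rewrite big_geq //; lia.
rewrite big_nat_recr //= IH.
case: (ltnP b N.+1) => hb; case: (leqP a N.+1) => ha /=; lia.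
Qed.

Lemma max_mem (P : pred nat) a b :
  (exists2 v, a <= v < b & P v) ->
  let M := \max_(a <= v < b | P v) v in
  [/\ a <= M < b, P M & forall w, a <= w < b -> P w -> w <= M].
Proof.
move=> [v hv Pv] M.
have hle : forall w, a <= w < b -> P w -> w <= M.
  by move=> w hw Pw; apply: (@leq_bigmax_seq _ _ _ (fun v => v)); rewrite // mem_index_iota.
have : M = 0 \/ (a <= M < b /\ P M).
  rewrite /M big_seq_cond.
  apply: (big_ind (fun x => x = 0 \/ (a <= x < b /\ P x))); first by left.
    move=> x y hx hy; rewrite /maxn; by case: ifP.
  by move=> i /andP[]; rewrite mem_index_iota => hi Pi; right.
case=> [M0|[hM PM]]; last by split.
have := hle v hv Pv; rewrite M0 leqn0 => /eqP v0.
subst v; split=> // w hw Pw; rewrite -M0; exact: hle.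
Qed.

Definition Fb (K : nat) (x : nat -> bool) (i : nat) : nat :=
  \sum_((i.-1 * K).+1 <= v < (i * K).+1) (x v : nat).

Lemma mul_pred K i : 1 <= i -> i * K = i.-1 * K + K.
Proof. by case: i => // i _; rewrite mulSn addnC. Qed.

Lemma Fb_le K x i : 1 <= i -> Fb K x i <= K.
Proof.
move=> hi; apply: leq_trans (sum_bool_le _ _ _) _.
rewrite (mul_pred K hi); lia.
Qed.

Lemma Fb_lt K x i v : 1 <= i -> i.-1 * K < v <= i * K -> x v = false -> Fb K x i < K.
Proof.
move=> hi hv xv; rewrite /Fb (@sum_split _ _ v); last lia.
rewrite xv /=.
have h1 := sum_bool_le x (i.-1 * K).+1 v.
have h2 := sum_bool_le x v.+1 (i * K).+1.
have := mul_pred K hi.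
move: h1 h2; set s1 := \sum_(_ <= _ < v) _; set s2 := \sum_(_ <= _ < _) _.
move: s1 s2 (i.-1 * K) (i * K) hv => s1 s2 lo hh hv h1 h2 e; lia.
Qed.

Lemma Fb_eq K x y i : (forall v, i.-1 * K < v <= i * K -> x v = y v) -> Fb K x i = Fb K y i.
Proof. by move=> h; apply: eq_big_nat => v hv; rewrite h. Qed.

Lemma Fb_zero K x i : (forall v, i.-1 * K < v <= i * K -> x v = false) -> Fb K x i = 0.
Proof.
move=> h; rewrite (@Fb_eq K x (fun _ => false)) //.
by rewrite /Fb sum_nat_const_nat muln0.
Qed.

Lemma Fb_upd K x i u : i.-1 * K < u <= i * K -> x u = false ->
  Fb K (fun v => x v || (v == u)) i = (Fb K x i).+1.
Proof.
move=> hu xu.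
have hu' : (i.-1 * K).+1 <= u < (i * K).+1 by move: hu => /andP[h1 h2]; rewrite h1 ltnS h2.
rewrite /Fb (sum_split _ hu') [in RHS](sum_split _ hu').
rewrite xu eqxx /=.
rewrite (@eq_big_nat _ _ _ _ _ _ (fun v => x v : nat)); last first.
  by move=> v /andP[_ hv]; rewrite (_ : (v == u) = false) ?orbF //; apply/negbTE; rewrite neq_ltn hv.
rewrite [in X in _ + _ + X = _](@eq_big_nat _ _ _ _ _ _ (fun v => x v : nat)); last first.
  by move=> v /andP[hv _]; rewrite (_ : (v == u) = false) ?orbF //; apply/negbTE; rewrite neq_ltn hv orbT.
by rewrite addn0 addn1 addSn.
Qed.

Lemma Fb_full K x i v : 1 <= i -> Fb K x i = K -> i.-1 * K < v <= i * K -> x v = true.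
Proof.
move=> hi hF hv; case xv: (x v) => //.
have := Fb_lt hi hv xv; lia.
Qed.

Lemma sum_eq1 u N : 1 <= u <= N -> \sum_(1 <= v < N.+1) ((v == u) : nat) = 1.
Proof.
move=> hu.
rewrite (@eq_big_nat _ _ _ _ _ _ (fun v => ((u <= v) && (v <= u)) : nat)); last first.
  by move=> v _; rewrite eqn_leq andbC.
rewrite cnt_interval; lia.
Qed.

Lemma weight_fire n k c u t : 2 <= k -> 1 <= t <= n -> in_edge k t u -> 1 <= u -> k - 1 <= c u ->
  weight (n * (k - 1)) (fire k c u t) + (t == 1) = weight (n * (k - 1)) c.
Proof.
move=> hk ht he hu hcu.
set K := k - 1 in hcu *.
have hK : 1 <= K by rewrite /K; lia.
have pw : forall v, 1 <= v ->
   fire k c u t v + K * (v == u) + (v == u) = c v + in_edge k t v.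
  move=> v hv; rewrite /fire; case: eqP => [->|hvu].
    rewrite he /= muln1; lia.
  rewrite muln0 !addn0; case: (in_edge k t v) => /=; last by rewrite addn0.
  have -> : (v != 0) by rewrite -lt0n.
  by rewrite addn1.
have hs : \sum_(1 <= v < (n * K).+1) (fire k c u t v + K * (v == u) + (v == u))
        = \sum_(1 <= v < (n * K).+1) (c v + in_edge k t v).
  by apply: eq_big_nat => v /andP[hv _]; exact: pw.
move: hs; rewrite !big_split /= -big_distrr /=.
have hKt : K * t = K * (t - 1) + K by rewrite mulnBr muln1 subnK // leq_pmulr //; lia.
have hKn : K * t <= n * K by rewrite mulnC leq_pmul2r //; lia.
have heu : u <= n * K by move: he; rewrite /in_edge -/K; lia.
rewrite sum_eq1; last lia.
rewrite /in_edge -/K cnt_interval.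
rewrite /weight -/K.
move: hKt hKn; case: (t =P 1) => [->|ht1] /=.
  rewrite subnn muln0 /=; lia.
have : 1 <= t - 1 by lia.
move=> ht2 hKt hKn.
have : K <= K * (t - 1) by rewrite leq_pmulr.
lia.
Qed.

Inductive INVm (n k : nat) (c0 : config) (m : nat) (x : nat -> bool) (d c : config) : Prop :=
  InvM of 1 <= m <= n &
      (forall v, 1 <= v <= n * (k - 1) -> d v <= k - 2) &
      (forall v, m * (k - 1) < v <= n * (k - 1) -> c v <= k - 2) &
      (forall i v, 1 <= i <= m -> i.-1 * (k - 1) < v < i * (k - 1) ->
          c v + k * x v = d v + 1 + Fb (k - 1) x i) &
      (forall i, 1 <= i < m -> x (i * (k - 1)) = false /\ c (i * (k - 1)) = Fb (k - 1) x i.+1) &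
      (if x (m * (k - 1)) then c (m * (k - 1)) < Fb (k - 1) x m else c (m * (k - 1)) <= k - 1) &
      weight (n * (k - 1)) c + Fb (k - 1) x 1 = weight (n * (k - 1)) c0 + (k - 1).

Lemma in_edge_iff k t v : in_edge k t v = (t.-1 * (k - 1) <= v <= t * (k - 1)).
Proof. by rewrite /in_edge (mulnC (k - 1) (t - 1)) (mulnC (k - 1) t) [t - 1]subn1. Qed.

Lemma fire_u k c u t : fire k c u t u = c u - (k - 1).
Proof. by rewrite /fire eqxx. Qed.

Lemma fire_in k c u t v : v != u -> 1 <= v -> in_edge k t v -> fire k c u t v = (c v).+1.
Proof. by move=> /negbTE h1 h2 h3; rewrite /fire h1 h3 -lt0n h2. Qed.

Lemma fire_out k c u t v : v != u -> ~~ in_edge k t v -> fire k c u t v = c v.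
Proof. by move=> /negbTE h1 /negbTE h3; rewrite /fire h1 h3. Qed.

Lemma mulK_le K a b : a <= b -> a * K <= b * K.
Proof. by move=> h; rewrite leq_mul2r h orbT. Qed.

Lemma mulK_lt K a b : a * K < b * K -> a < b.
Proof. by apply: contraTT; rewrite -!leqNgt; exact: mulK_le. Qed.

Lemma inv_init n k c0 : 1 <= n -> 2 <= k -> stable k (n * (k - 1)) c0 ->
  INVm n k c0 1 (fun _ => false) c0 (cbar k c0).
Proof.
move=> hn hk hst.
have hK : 1 <= k - 1 by lia.
have hKn : k - 1 <= n * (k - 1) by rewrite leq_pmull.
split.
- by rewrite leqnn hn.
- exact: hst.
- move=> v; rewrite mul1n => /andP[h1 h2]; rewrite /cbar.
  have -> : (1 <= v) && (v <= k - 1) = false by lia.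
  by apply: hst; lia.
- move=> i v /andP[hi1 hi2] hv.
  have hi : i = 1 by lia.
  subst i; rewrite Fb_zero //= mul1n in hv *.
  rewrite /cbar; have -> : (1 <= v) && (v <= k - 1) by lia.
  by rewrite muln0 !addn0 addn1.
- by move=> i; lia.
- rewrite /= mul1n /cbar; have -> : (1 <= k - 1) && (k - 1 <= k - 1) by lia.
  have := hst (k - 1); lia.
- rewrite Fb_zero // addn0 /weight.
  rewrite (@eq_big_nat _ _ _ _ _ _ (fun v => c0 v + ((1 <= v) && (v <= k - 1)) : nat)); last first.
    by move=> v _; rewrite /cbar; case: ifP => _ /=; rewrite ?addn1 ?addn0.
  rewrite big_split /= cnt_interval; congr (_ + _); lia.
Qed.

Lemma inv_down n k c0 m x d c u : 2 <= k -> INVm n k c0 m x d c -> 2 <= m ->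
  (forall w, 1 <= w <= n * (k - 1) -> k - 1 <= c w -> w <= u) -> u <= m.-1 * (k - 1) ->
  INVm n k c0 m.-1 x d c.
Proof.
move=> hk [H1 H2 H3 H4 H5 H6 H7] hm hmax hu.
have e := @mul_pred (k - 1) m (ltnW hm).
constructor => //.
- lia.
- move=> v hv; case: (ltnP (m * (k - 1)) v) => h; first by apply: H3; lia.
  case: (leqP (k - 1) (c v)) => hc; last lia.
  have := hmax v ltac:(lia) hc; lia.
- move=> i v hi hv; apply: H4 => //; lia.
- move=> i hi; apply: H5; lia.
- have [h1 h2] := H5 m.-1 ltac:(lia).
  rewrite h1 h2 prednK; last lia.
  apply: Fb_le; lia.
Qed.

Lemma step_within n k c0 m x d c u : 2 <= k -> INVm n k c0 m x d c ->
  m.-1 * (k - 1) < u -> u <= m * (k - 1) -> k - 1 <= c u -> x u = false ->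
  (forall w, 1 <= w <= n * (k - 1) -> k - 1 <= c w -> w <= u) ->
  INVm n k c0 m (fun v => x v || (v == u)) d (fire k c u m).
Proof.
move=> hk [H1 H2 H3 H4 H5 H6 H7] hlo hhi hcu hxu hmax.
have hm1 : 1 <= m by case/andP: H1.
have em := @mul_pred (k - 1) m hm1.
have hK : 1 <= k - 1 by lia.
have hmn : m * (k - 1) <= n * (k - 1) by apply: mulK_le; case/andP: H1.
have hu' : m.-1 * (k - 1) < u <= m * (k - 1) by rewrite hlo hhi.
have Fup := Fb_upd hu' hxu.
have neq : forall v, v != u = (v < u) || (u < v) by move=> v; rewrite neq_ltn.
constructor => //.
- move=> v hv.
  have h1 : v != u by rewrite neq; lia.
  have hev : ~~ in_edge k m v by rewrite in_edge_iff; lia.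
  rewrite fire_out //; exact: H3.
- move=> i v hi hv /=; case: (i =P m) => [hm|him].
  + subst i; rewrite Fup; case: (v =P u) => [hvu|hvu].
      subst v; rewrite fire_u orbT.
      have := H4 m u hi hv; rewrite hxu /= muln0 addn0 => h; lia.
    have hvu' : v != u by apply/eqP.
    have h1v : 1 <= v by case/andP: hv => h _; exact: leq_trans (ltn0Sn _) h.
    have hev : in_edge k m v by rewrite in_edge_iff; lia.
    rewrite fire_in // orbF.
    have := H4 m v hi hv; lia.
  + have hi' : i <= m.-1 by lia.
    have hik := mulK_le (k - 1) hi'.
    have hvu : (v == u) = false by apply/negbTE; rewrite neq; lia.
    have hvu' : v != u by rewrite hvu.
    have hev : ~~ in_edge k m v by rewrite in_edge_iff; lia.
    rewrite fire_out // hvu orbF.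
    rewrite (@Fb_eq (k - 1) (fun v => x v || (v == u)) x i); first exact: H4.
    move=> w hw; rewrite (_ : (w == u) = false) ?orbF //; apply/negbTE; rewrite neq; lia.
- move=> i hi /=.
  have hik := mulK_le (k - 1) (_ : i <= m.-1).
  have ei := @mul_pred (k - 1) i (_ : 1 <= i).
  have hi' : i <= m.-1 by lia.
  have hi1 : 1 <= i by lia.
  have hik' := hik hi'; have ei' := ei hi1.
  have hiu : (i * (k - 1) == u) = false by apply/negbTE; rewrite neq; lia.
  rewrite hiu orbF; have [h1x h2] := H5 i hi; split => //.
  case: (i.+1 =P m) => [hm|hm].
    have h1 : i * (k - 1) != u by rewrite hiu.
    have h3 : 1 <= i * (k - 1) by lia.
    have hev : in_edge k m (i * (k - 1)) by rewrite in_edge_iff -hm /=; rewrite -hm /= in em; lia.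
    by rewrite fire_in // h2 hm Fup.
  have hik2 := mulK_le (k - 1) (_ : i.+1 <= m.-1).
  have hik2' := hik2 ltac:(lia).
  have h1' : i * (k - 1) != u by rewrite hiu.
  have hev : ~~ in_edge k m (i * (k - 1)) by rewrite in_edge_iff; lia.
  rewrite fire_out // h2; apply: Fb_eq => w hw; rewrite (_ : (w == u) = false) ?orbF //; apply/negbTE; rewrite neq; lia.
- rewrite /=; case: (u =P m * (k - 1)) => [hum|hum].
    rewrite -hum eqxx orbT fire_u Fup.
    rewrite -hum hxu in H6; lia.
  have hmu : (m * (k - 1) == u) = false by apply/negbTE/eqP => h; apply: hum.
  have h1 : m * (k - 1) != u by rewrite hmu.
  have h3 : 1 <= m * (k - 1) by lia.
  have hev : in_edge k m (m * (k - 1)) by rewrite in_edge_iff; lia.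
  rewrite hmu orbF fire_in //.
  rewrite Fup; move: H6; case: (x (m * (k - 1))) => h; first lia.
  case: (leqP (k - 1) (c (m * (k - 1)))) => hc; last lia.
  have := hmax (m * (k - 1)) ltac:(lia) hc; lia.
- have hew : in_edge k m u by rewrite in_edge_iff; lia.
  have h1u : 1 <= u by exact: leq_trans (ltn0Sn _) hlo.
  have hw' := weight_fire hk H1 hew h1u hcu.
  case: (m =P 1) => [hm|hm].
    subst m; rewrite Fup; rewrite eqxx /= in hw'; lia.
  rewrite (@Fb_eq (k - 1) (fun v => x v || (v == u)) x 1); last first.
    move=> w hw2; rewrite (_ : (w == u) = false) ?orbF //; apply/negbTE; rewrite neq.
    have := mulK_le (k - 1) (_ : 1 <= m.-1); lia.
  have : (m == 1) = false by apply/eqP.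
  move=> e; rewrite e /= addn0 in hw'; lia.
Qed.

Lemma step_right n k c0 m x d c : 2 <= k -> INVm n k c0 m x d c -> m < n ->
  k - 1 <= c (m * (k - 1)) -> x (m * (k - 1)) = false ->
  INVm n k c0 m.+1 (fun v => if m * (k - 1) < v then false else x v)
       (fun v => if m * (k - 1) < v then c v else d v) (fire k c (m * (k - 1)) m.+1).
Proof.
move=> hk [H1 H2 H3 H4 H5 H6 H7] hmn hcu hxu.
set K := k - 1 in H2 H3 H4 H5 H6 H7 hcu hxu *.
set u := m * K.
have hm1 : 1 <= m by case/andP: H1.
have hK : 1 <= K by rewrite /K; lia.
have em : m.+1 * K = u + K by rewrite mulSn addnC.
have hSn : m.+1 * K <= n * K by apply: mulK_le.
have hu1 : 1 <= u by rewrite /u; rewrite -(mul1n 1) leq_mul.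
rewrite hxu in H6.
have hcu' : c u = K by rewrite /u; lia.
have neq : forall v, v != u = (v < u) || (u < v) by move=> v; rewrite neq_ltn.
constructor => //; try rewrite -/K.
- move=> v hv /=; case: ifP => h; first by apply: H3; lia.
  exact: H2.
- move=> v hv.
  have h1 : v != u by rewrite neq; lia.
  have hev : ~~ in_edge k m.+1 v by rewrite in_edge_iff -/K /=; lia.
  rewrite fire_out //; apply: H3; lia.
- move=> i v hi hv /=.
  case: (i =P m.+1) => [hi'|hi'].
    subst i; move: hv => /= hv.
    have -> : u < v by lia.
    rewrite Fb_zero /=; last by move=> w /= hw; have -> : u < w by lia.
    have h1 : v != u by rewrite neq; lia.
    have h1v : 1 <= v by lia.
    have hev : in_edge k m.+1 v by rewrite in_edge_iff -/K /=; lia.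
    rewrite fire_in // muln0; lia.
  have hi2 : i <= m by lia.
  have hik := mulK_le K hi2.
  have -> : (u < v) = false by rewrite /u; lia.
  have h1 : v != u by rewrite neq; lia.
  have hev : ~~ in_edge k m.+1 v by rewrite in_edge_iff -/K /=; lia.
  rewrite fire_out // (@Fb_eq K _ x); first by apply: H4 => //; lia.
  by move=> w hw /=; have -> : (u < w) = false by lia.
- move=> i hi /=.
  case: (i =P m) => [hi'|hi'].
    subst i; rewrite ltnn hxu; split => //.
    rewrite fire_u hcu' subnn Fb_zero //= => w hw; have -> : u < w by lia.
    by [].
  have hi2 : i.+1 <= m by lia.
  have hik := mulK_le K hi2.
  have ei : i.+1 * K = i * K + K by rewrite mulSn addnC.
  have -> : (u < i * K) = false by rewrite /u; lia.
  have [h1x h2] := H5 i ltac:(lia).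
  split => //.
  have h1 : i * K != u by rewrite neq; lia.
  have hev : ~~ in_edge k m.+1 (i * K) by rewrite in_edge_iff -/K /=; lia.
  rewrite fire_out // h2 (@Fb_eq K _ x) //.
  by move=> w hw /=; have -> : (u < w) = false by lia.
- rewrite /= (_ : u < m.+1 * K); last lia.
  have h1 : m.+1 * K != u by rewrite neq; lia.
  have h1v : 1 <= m.+1 * K by lia.
  have hev : in_edge k m.+1 (m.+1 * K) by rewrite in_edge_iff -/K /=; lia.
  rewrite fire_in //.
  have := H3 (m.+1 * K) ltac:(lia); lia.
- have hew : in_edge k m.+1 u by rewrite in_edge_iff -/K /=; lia.
  have h1n : 1 <= m.+1 <= n by lia.
  have hw' := weight_fire hk h1n hew hu1 hcu.
  rewrite (_ : (m.+1 == 1) = false) ?addn0 -/K in hw'; last by apply/eqP; lia.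
  rewrite hw' (@Fb_eq K _ x 1); first exact: H7.
  move=> w /= hw; have -> : (u < w) = false; last by [].
  have := mulK_le K hm1; rewrite mul1n -/u; lia.
Qed.

Lemma down_to n k c0 x d c u : 2 <= k -> 1 <= u ->
  (forall w, 1 <= w <= n * (k - 1) -> k - 1 <= c w -> w <= u) ->
  forall N m, m <= N -> INVm n k c0 m x d c ->
  exists m', INVm n k c0 m' x d c /\ m'.-1 * (k - 1) < u.
Proof.
move=> hk hu hmax; elim=> [|N IH] m hmN hI.
  case: hI => /andP[h1 _]; lia.
case: (ltnP (m.-1 * (k - 1)) u) => h; first by exists m.
have hm1 : 1 <= m by case: hI => /andP[].
have hm2 : 2 <= m.
  case: (ltnP 1 m) => // hm.
  have e : m = 1 by lia.
  rewrite e /= mul0n in h; lia.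
apply: (IH m.-1); first lia.
exact: (inv_down hk hI hm2 hmax h).
Qed.

Lemma inv_reach n k c0 c : 1 <= n -> 2 <= k -> stable k (n * (k - 1)) c0 ->
  reach n k (cbar k c0) c -> exists m x d, INVm n k c0 m x d c.
Proof.
move=> hn hk hst; elim=> [|c1 c2 _ [m [x [d hI]]] [hns [t [ht he ->]]]].
  by exists 1, (fun _ => false), c0; apply: inv_init.
have hK : 1 <= k - 1 by lia.
have [w hw] : exists w, (1 <= w <= n * (k - 1)) && (k - 1 <= c1 w).
  apply: NNPP => hno; apply: hns => v hv; case: (leqP (c1 v) (k - 2)) => // hlt.
  exfalso; apply: hno; exists v; rewrite hv /=; lia.
have hex : exists2 v, 1 <= v < (n * (k - 1)).+1 & k - 1 <= c1 v.
  by case/andP: hw => h1 h2; exists w; rewrite // ltnS h1.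
have := @max_mem (fun v => k - 1 <= c1 v) 1 (n * (k - 1)).+1 hex.
rewrite /= -/(u_c k (n * (k - 1)) c1) in he *.
set u := u_c k (n * (k - 1)) c1 in he *.
move=> [hu hcu hmax'].
have hmax : forall w, 1 <= w <= n * (k - 1) -> k - 1 <= c1 w -> w <= u.
  by move=> v hv; apply: hmax'; rewrite ltnS.
have hu1 : 1 <= u by case/andP: hu.
have [m' [hI' hlo]] := down_to hk hu1 hmax (leqnn m) hI.
case: hI' => H1 H2 H3 H4 H5 H6 H7.
have hI2 : INVm n k c0 m' x d c1 by constructor.
have hmn : m' * (k - 1) <= n * (k - 1) by apply: mulK_le; case/andP: H1.
have hhi : u <= m' * (k - 1).
  case: (leqP u (m' * (k - 1))) => // h.
  have := H3 u ltac:(move: hu; rewrite ltnS; lia); lia.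
have em := @mul_pred (k - 1) m' (_ : 1 <= m').
have em' := em ltac:(by case/andP: H1).
have hxu : x u = false.
  case xu: (x u) => //; exfalso.
  have hFb : Fb (k - 1) x m' <= k - 1 by apply: Fb_le; case/andP: H1.
  case: (ltngtP u (m' * (k - 1))) => h; last 1 first.
  - by rewrite -h xu in H6; lia.
  - have := H4 m' u ltac:(case/andP: H1 => h1 _; rewrite h1 leqnn) ltac:(lia).
    rewrite xu muln1.
    have := H2 u ltac:(move: hu; rewrite ltnS; lia); lia.
  - lia.
move: he; rewrite in_edge_iff => he.
have h1 : m'.-1 < t by apply: (@mulK_lt (k - 1)); lia.
have h2 : t.-1 <= m' by rewrite -(leq_pmul2r hK); lia.
case: (t =P m') => [htm|htm].
  subst t; exists m', (fun v => x v || (v == u)), d.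
  exact: step_within hk hI2 hlo hhi hcu hxu hmax.
have ht1 : t = m'.+1 by lia.
subst t.
have hum : u = m' * (k - 1) by move: he => /= he; lia.
exists m'.+1; eexists; eexists.
have hmn' : m' < n by case/andP: ht; lia.
rewrite hum; apply: (step_right hk hI2 hmn'); by rewrite -hum.
Qed.

Lemma junction n k c0 m x d c t : 2 <= k -> INVm n k c0 m x d c -> 1 <= t <= n ->
  c (t * (k - 1)) <= k - 1 /\
  (c (t * (k - 1)) = k - 1 -> forall v, t * (k - 1) < v <= n * (k - 1) -> c v <= k - 2).
Proof.
move=> hk [H1 H2 H3 H4 H5 H6 H7] ht.
have hK : 1 <= k - 1 by lia.
have htn : t * (k - 1) <= n * (k - 1) by apply: mulK_le; case/andP: ht.
have hm1 : 1 <= m by case/andP: H1.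
case: (ltngtP t m) => htm.
- have [hx hc] := H5 t ltac:(lia).
  have hF := @Fb_le (k - 1) x t.+1 isT.
  rewrite hc; split => // hK1 v hv.
  have ei : t.+1 * (k - 1) = t * (k - 1) + (k - 1) by rewrite mulSn addnC.
  case: (ltngtP t.+1 m) => htm2.
  + have [hx2 _] := H5 t.+1 ltac:(lia).
    have := @Fb_lt (k - 1) x t.+1 (t.+1 * (k - 1)) isT ltac:(rewrite /=; lia) hx2; lia.
  + lia.
  + subst m.
    case: (ltnP (t.+1 * (k - 1)) v) => hv2; first by apply: H3; lia.
    have hxv : x v by apply: (@Fb_full (k - 1) x t.+1 v isT hK1); rewrite /=; lia.
    case: (ltngtP v (t.+1 * (k - 1))) => hv3; last 1 first.
    * by move: H6; rewrite -hv3 hxv; lia.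
    * have := H4 t.+1 v ltac:(lia) ltac:(rewrite /=; lia).
      rewrite hxv muln1.
      have := H2 v ltac:(lia); lia.
    * lia.
- have := mulK_lt (_ : m * (k - 1) < t * (k - 1)).
  have hmt : m * (k - 1) < t * (k - 1) by rewrite ltn_pmul2r.
  have := H3 (t * (k - 1)) ltac:(lia); lia.
- subst m; split.
    by move: H6; case: (x _) => h //; have := @Fb_le (k - 1) x t ltac:(lia); lia.
  move=> _ v hv; exact: H3.
Qed.

Theorem lemma4p1 (n k : nat) (c0 : config) :
  1 <= n -> 2 <= k -> stable k (n * (k - 1)) c0 ->
  (forall t, 1 <= t <= n -> forall c, in_firing_graph n k c0 c ->
     ((~ stable k (n * (k - 1)) c /\ u_c k (n * (k - 1)) c = t * (k - 1))
      <-> c (t * (k - 1)) = k - 1)) /\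
  (forall c, in_firing_graph n k c0 c ->
     weight (n * (k - 1)) c0 <= weight (n * (k - 1)) c).
Proof.
move=> hn hk hst.
have hK : 1 <= k - 1 by lia.
split.
- move=> t ht c [->|hr].
    have htn : t * (k - 1) <= n * (k - 1) by apply: mulK_le; case/andP: ht.
    have ht1 : 1 <= t * (k - 1) by rewrite -(mul1n 1) leq_mul //; case/andP: ht.
    split; first by case=> hns _; exfalso; apply: hns.
    by move=> h; have := hst (t * (k - 1)) ltac:(lia); lia.
  have [m [x [d hI]]] := inv_reach hn hk hst hr.
  have [J1 J2] := junction hk hI ht.
  have htn : t * (k - 1) <= n * (k - 1) by apply: mulK_le; case/andP: ht.
  have ht1 : 1 <= t * (k - 1) by rewrite -(mul1n 1) leq_mul //; case/andP: ht.
  split.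
  + case=> hns hu.
    have [w hw] : exists w, (1 <= w <= n * (k - 1)) && (k - 1 <= c w).
      apply: NNPP => hno; apply: hns => v hv; case: (leqP (c v) (k - 2)) => // hlt.
      exfalso; apply: hno; exists v; rewrite hv /=; lia.
    have hex : exists2 v, 1 <= v < (n * (k - 1)).+1 & k - 1 <= c v.
  by case/andP: hw => h1 h2; exists w; rewrite // ltnS h1.
have := @max_mem (fun v => k - 1 <= c v) 1 (n * (k - 1)).+1 hex.
    rewrite /= -/(u_c k (n * (k - 1)) c) hu.
    case=> _ hc _; lia.
  + move=> hc; split.
      move=> hst'; have := hst' (t * (k - 1)) ltac:(lia); lia.
    have hex : exists2 v, 1 <= v < (n * (k - 1)).+1 & k - 1 <= c v.
      by exists (t * (k - 1)); rewrite ?hc // ltnS; lia.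
    have := @max_mem (fun v => k - 1 <= c v) 1 (n * (k - 1)).+1 hex.
    rewrite /= -/(u_c k (n * (k - 1)) c).
    case=> hu hcu hmax.
    apply/eqP; rewrite eqn_leq; apply/andP; split.
      case: (leqP (u_c k (n * (k - 1)) c) (t * (k - 1))) => // h.
      have := J2 hc (u_c k (n * (k - 1)) c) ltac:(move: hu; rewrite ltnS; lia); lia.
    by apply: hmax; rewrite ?hc // ltnS; lia.
- move=> c [->|hr] //.
  have [m [x [d [H1 _ _ _ _ _ H7]]]] := inv_reach hn hk hst hr.
  have := @Fb_le (k - 1) x 1 isT; lia.
Qed.
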